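(* Let $q$ be a positive integer and let $f(r)=\frac{4}{\pi^2}\sum_{k\ge0}\frac{\sec((2k+1)\pi r)}{(2k+1)^2}$. Then \[ f(1/q)=\begin{cases}1/2 & \text{if } q\equiv 0 \pmod 4,\\ 1/2-1/q & \text{if } q\equiv 1 \pmod 4,\\ \infty & \text{if } q\equiv 2 \pmod 4,\\ 1/2+1/q & \text{if } q\equiv 3 \pmod 4,\end{cases} \] where the value $\infty$ means that $1/q$ is a singularity of $f$.
   Context: The function $f$ is defined by the series $f(r)=\frac{4}{\pi^2}\sum_{k\ge0}\frac{\sec((2k+1)\pi r)}{(2k+1)^2}$, with $\sec x=1/\cos x$. Equivalently $f(r)=\tfrac12(\psi(r)-\psi(r+1))$ where $\psi(r)=\frac{4}{\pi^2}\sum_{n\ge1}\frac{\sec(n\pi r)}{n^2}$. The function $f$ is even and satisfies $f(r+1)=-f(r)$. *)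

(* Defs.v *)
From Stdlib Require Import Reals.
From Coquelicot Require Import Coquelicot.
Open Scope R_scope.

Definition sec (x : R) : R := / cos x.

Definition f_term (r : R) (k : nat) : R :=
  4 / PI ^ 2 * (sec ((2 * INR k + 1) * PI * r) / (2 * INR k + 1) ^ 2).

(* Main.v *)
Require Import Defs.
From Stdlib Require Import Reals Arith Lra Lia.
From Coquelicot Require Import Coquelicot.
Open Scope R_scope.
Fixpoint fsum (g : nat -> R) (n : nat) : R :=
  match n with O => 0 | S m => fsum g m + g m end.

Lemma cos_prod2 a b : 2 * cos a * cos b = cos (a - b) + cos (a + b).
Proof. rewrite cos_minus, cos_plus; ring. Qed.

Lemma telesc th M :
  2 * cos th * fsum (fun i => (-1)^i * cos ((2 * INR i + 1) * th)) M
  = 1 - (-1)^M * cos (2 * INR M * th).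
Proof.
  induction M as [|M IH]; cbn [fsum pow].
  - simpl INR. replace (2 * 0 * th) with 0 by ring; rewrite cos_0; ring.
  - rewrite Rmult_plus_distr_l, IH, S_INR.
    replace (2 * cos th * ((-1) ^ M * cos ((2 * INR M + 1) * th)))
      with ((-1)^M * (2 * cos ((2 * INR M + 1) * th) * cos th)) by ring.
    rewrite cos_prod2.
    replace ((2 * INR M + 1) * th - th) with (2 * INR M * th) by ring.
    replace ((2 * INR M + 1) * th + th) with (2 * (INR M + 1) * th) by ring.
    ring.
Qed.

Lemma fsum_ext g h M : (forall i, (i < M)%nat -> g i = h i) -> fsum g M = fsum h M.
Proof.
  induction M as [|M IH]; intros H; cbn [fsum]; [reflexivity|].
  rewrite IH, H; [reflexivity|lia|intros; apply H; lia].
Qed.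

Lemma fsum_scal c g M : c * fsum g M = fsum (fun i => c * g i) M.
Proof. induction M as [|M IH]; cbn [fsum]; [ring|]. rewrite <- IH; ring. Qed.

Lemma fsum_f_R0 g N : fsum g (S N) = sum_f_R0 g N.
Proof. induction N as [|N IH]; cbn [fsum sum_f_R0] in *; [ring|]. rewrite <- IH; reflexivity. Qed.

Lemma is_series_fsum a l : is_series a l <-> is_lim_seq (fun N => fsum a N) l.
Proof.
  rewrite (is_lim_seq_incr_1 (fun N => fsum a N)).
  split; intro H.
  - eapply is_lim_seq_ext; [|exact H]. intro n; rewrite fsum_f_R0, sum_n_Reals; reflexivity.
  - eapply is_lim_seq_ext in H; [exact H|]. intro n; rewrite fsum_f_R0, sum_n_Reals; reflexivity.
Qed.

Lemma is_derive_fsum (g dg : nat -> R -> R) t N :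
  (forall k, is_derive (g k) t (dg k t)) ->
  is_derive (fun u => fsum (fun k => g k u) N) t (fsum (fun k => dg k t) N).
Proof.
  intros H; induction N as [|N IH]; cbn [fsum].
  - auto_derive; auto.
  - apply (is_derive_plus (fun u => fsum (fun k => g k u) N) (g N)); auto.
Qed.

Lemma sin_kPI k : sin (INR k * PI) = 0.
Proof.
  induction k as [|k IH]; [simpl; rewrite Rmult_0_l; apply sin_0|].
  rewrite S_INR, Rmult_plus_distr_r, Rmult_1_l, neg_sin, IH; ring.
Qed.

Lemma cos_kPI k : cos (INR k * PI) = (-1)^k.
Proof.
  induction k as [|k IH]; [simpl; rewrite Rmult_0_l; apply cos_0|].
  rewrite S_INR, Rmult_plus_distr_r, Rmult_1_l, neg_cos, IH; simpl; ring.
Qed.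

Lemma mvt_bound f df a b M :
  (forall c, Rmin a b <= c <= Rmax a b -> is_derive f c (df c) /\ Rabs (df c) <= M) ->
  Rabs (f b - f a) <= M * Rabs (b - a).
Proof.
  intros H.
  destruct (MVT_abs f df a b) as [c [Hc Hin]].
  - intros c Hc. apply is_derive_Reals. apply H; auto.
  - rewrite Hc. apply Rmult_le_compat_r; [apply Rabs_pos|]. apply H; auto.
Qed.
Definition Tn N t := fsum (fun k => sin ((2 * INR k + 1) * t) / (2 * INR k + 1)) N.
Definition Sn N t := fsum (fun k => cos ((2 * INR k + 1) * t) / (2 * INR k + 1)^2) N.
Definition Kn N t := fsum (fun k => cos ((2 * INR k + 1) * t)) N.

Lemma odd_pos k : 0 < 2 * INR k + 1.
Proof. pose proof (pos_INR k); lra. Qed.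

Lemma Kn_eq N t : 2 * sin t * Kn N t = sin (2 * INR N * t).
Proof.
  unfold Kn; induction N as [|N IH]; cbn [fsum].
  - simpl INR. replace (2 * 0 * t) with 0 by ring. rewrite sin_0; ring.
  - rewrite Rmult_plus_distr_l, IH, S_INR.
    replace (2 * INR N * t) with ((2 * INR N + 1) * t - t) by ring.
    replace (2 * (INR N + 1) * t) with ((2 * INR N + 1) * t + t) by ring.
    rewrite sin_minus, sin_plus; ring.
Qed.

Lemma Sn_deriv N t : is_derive (fun u => Sn N u) t (- Tn N t).
Proof.
  unfold Sn, Tn.
  replace (- fsum (fun k => sin ((2 * INR k + 1) * t) / (2 * INR k + 1)) N)
    with (fsum (fun k => - sin ((2 * INR k + 1) * t) / (2 * INR k + 1)) N).
  - apply (is_derive_fsum (fun k u => cos ((2 * INR k + 1) * u) / (2 * INR k + 1)^2)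
                          (fun k u => - sin ((2 * INR k + 1) * u) / (2 * INR k + 1))).
    intro k. pose proof (odd_pos k). auto_derive; [auto|]. field. lra.
  - replace (- fsum (fun k => sin ((2 * INR k + 1) * t) / (2 * INR k + 1)) N)
      with ((-1) * fsum (fun k => sin ((2 * INR k + 1) * t) / (2 * INR k + 1)) N) by ring.
    rewrite fsum_scal. apply fsum_ext; intros; field. pose proof (odd_pos i); lra.
Qed.

Lemma Tn_deriv N t : is_derive (fun u => Tn N u) t (Kn N t).
Proof.
  unfold Tn, Kn.
  apply (is_derive_fsum (fun k u => sin ((2 * INR k + 1) * u) / (2 * INR k + 1))
                          (fun k u => cos ((2 * INR k + 1) * u))).
  intro k. pose proof (odd_pos k). auto_derive; [auto|]. field. lra.
Qed.

Definition phi N t := Tn N t + cos (2 * INR N * t) / (4 * INR N * sin t).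

Lemma phi_deriv N t : (0 < N)%nat -> sin t <> 0 ->
  is_derive (phi N) t (- cos (2 * INR N * t) * cos t / (4 * INR N * (sin t)^2)).
Proof.
  intros HN Hs. assert (0 < INR N) by (apply lt_0_INR; lia).
  assert (H1 := Tn_deriv N t).
  assert (H2 : is_derive (fun u => cos (2 * INR N * u) / (4 * INR N * sin u)) t
     ((- sin (2 * INR N * t) * (2 * INR N) * (4 * INR N * sin t)
       - cos (2 * INR N * t) * (4 * INR N * cos t)) / (4 * INR N * sin t)^2)).
  { auto_derive. { repeat split; auto. apply Rmult_integral_contrapositive; split; auto; lra. }
    field. split; auto; lra. }
  assert (H3 := is_derive_plus _ _ _ _ _ H1 H2).
  unfold phi. eapply is_derive_ext; [intro u; reflexivity|].
  replace (- cos (2 * INR N * t) * cos t / (4 * INR N * (sin t)^2)) with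
   (plus (Kn N t) ((- sin (2 * INR N * t) * (2 * INR N) * (4 * INR N * sin t)
       - cos (2 * INR N * t) * (4 * INR N * cos t)) / (4 * INR N * sin t)^2)).
  - exact H3.
  - rewrite <- Kn_eq. unfold plus; simpl. field. split; auto; lra.
Qed.

Definition inI x c := Rmin x (PI/2) <= c <= Rmax x (PI/2).

Lemma sin_between x c : 0 < x < PI -> inI x c -> sin x <= sin c.
Proof.
  intros Hx [H1 H2]. pose proof PI_RGT_0.
  destruct (Rle_dec x (PI/2)) as [Hl|Hl].
  - rewrite Rmin_left in H1 by lra. rewrite Rmax_right in H2 by lra.
    apply sin_incr_1; lra.
  - rewrite Rmin_right in H1 by lra. rewrite Rmax_left in H2 by lra.
    rewrite <- (sin_PI_x x), <- (sin_PI_x c). apply sin_incr_1; lra.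
Qed.

Lemma abs_cos_le a : Rabs (cos a) <= 1.
Proof. apply Rabs_le. pose proof (COS_bound a); lra. Qed.

Lemma abs_div_le a b B D : Rabs a <= B -> 0 < D <= b -> Rabs (a / b) <= B / D.
Proof.
  intros Ha [HD Hb]. unfold Rdiv. rewrite Rabs_mult, Rabs_inv, (Rabs_pos_eq b) by lra.
  apply Rmult_le_compat; try apply Rabs_pos; auto.
  - left; apply Rinv_0_lt_compat; lra.
  - apply Rinv_le_contravar; lra.
Qed.

Lemma inI_sub x c d : inI x c -> Rmin (PI/2) c <= d <= Rmax (PI/2) c -> inI x d.
Proof.
  unfold inI; intros [H1 H2] [H3 H4].
  assert (Rmin x (PI/2) <= PI/2 <= Rmax x (PI/2)) by (split; [apply Rmin_r|apply Rmax_r]).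
  split.
  - apply Rle_trans with (Rmin (PI/2) c); auto. apply Rmin_glb; lra.
  - apply Rle_trans with (Rmax (PI/2) c); auto. apply Rmax_lub; lra.
Qed.

Lemma inI_dist x c : 0 < x < PI -> inI x c -> Rabs (c - PI/2) <= PI/2.
Proof.
  intros Hx [H1 H2]. apply Rabs_le.
  destruct (Rle_dec x (PI/2)).
  - rewrite Rmin_left in H1 by lra. rewrite Rmax_right in H2 by lra. lra.
  - rewrite Rmin_right in H1 by lra. rewrite Rmax_left in H2 by lra. lra.
Qed.

Lemma Tn_close x N c : 0 < x < PI -> (0 < N)%nat -> inI x c ->
  Rabs (Tn N c - Tn N (PI/2)) <= 1 / (INR N * (sin x)^2).
Proof.
  intros Hx HN Hc.
  assert (HNr : 0 < INR N) by (apply lt_0_INR; lia).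
  set (m := sin x).
  assert (Hm : 0 < m) by (apply sin_gt_0; lra).
  assert (Hm1 : m <= 1) by (pose proof (SIN_bound x); unfold m; lra).
  assert (Hsd : forall d, inI x d -> m <= sin d) by (intros; apply sin_between; auto).
  assert (HM := mvt_bound (phi N) (fun t => - cos (2 * INR N * t) * cos t / (4 * INR N * (sin t)^2))
                  (PI/2) c (1 / (4 * INR N * m^2))).
  assert (HB : Rabs (phi N c - phi N (PI/2)) <= (1 / (4 * INR N * m^2)) * Rabs (c - PI / 2)).
  { apply HM. intros d Hd. assert (Hd' := Hsd d (inI_sub x c d Hc Hd)). split.
    - apply phi_deriv; auto; lra.
    - apply abs_div_le.
      + rewrite Rabs_mult, Rabs_Ropp. rewrite <- (Rmult_1_l 1).
        apply Rmult_le_compat; try apply Rabs_pos; apply abs_cos_le.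
      + split. { apply Rmult_lt_0_compat; [lra|]. apply pow_lt; auto. }
        apply Rmult_le_compat_l; [lra|]. apply pow_incr; lra. }
  assert (Hdist := inI_dist x c Hx Hc).
  assert (H1 : Rabs (cos (2 * INR N * c) / (4 * INR N * sin c)) <= 1 / (4 * INR N * m^2)).
  { apply abs_div_le; [apply abs_cos_le|]. split.
    - apply Rmult_lt_0_compat; [lra|]. apply pow_lt; auto.
    - assert (m ^ 2 <= m) by (simpl; nra). assert (m <= sin c) by (apply Hsd; auto). nra. }
  assert (H2 : Rabs (cos (2 * INR N * (PI/2)) / (4 * INR N * sin (PI/2))) <= 1 / (4 * INR N * m^2)).
  { apply abs_div_le; [apply abs_cos_le|]. rewrite sin_PI2. split.
    - apply Rmult_lt_0_compat; [lra|]. apply pow_lt; auto.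
    - assert (m ^ 2 <= 1) by (simpl; nra). nra. }
  unfold phi in HB.
  replace (Tn N c - Tn N (PI/2)) with
    ((Tn N c + cos (2 * INR N * c) / (4 * INR N * sin c) -
      (Tn N (PI / 2) + cos (2 * INR N * (PI / 2)) / (4 * INR N * sin (PI / 2))))
     - cos (2 * INR N * c) / (4 * INR N * sin c)
     + cos (2 * INR N * (PI/2)) / (4 * INR N * sin (PI/2))) by ring.
  assert (HP : PI <= 4) by apply PI_4.
  assert (Hpos : 0 < 1 / (4 * INR N * m^2)).
  { apply Rdiv_lt_0_compat; [lra|]. apply Rmult_lt_0_compat; [lra|]. apply pow_lt; auto. }
  eapply Rle_trans; [apply Rabs_triang|].
  eapply Rle_trans; [apply Rplus_le_compat_r, Rabs_triang|].
  rewrite Rabs_Ropp.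
  replace (1 / (INR N * m^2)) with (2 * (1 / (4 * INR N * m^2)) + 1 / (4 * INR N * m^2) + 1 / (4 * INR N * m^2)).
  2:{ field. split; lra. }
  apply Rplus_le_compat; [apply Rplus_le_compat|]; auto.
  eapply Rle_trans; [exact HB|]. rewrite Rmult_comm. apply Rmult_le_compat_r; lra.
Qed.

Lemma Sn_PI2 N : Sn N (PI/2) = 0.
Proof.
  unfold Sn. induction N as [|N IH]; cbn [fsum]; [reflexivity|]. rewrite IH.
  replace ((2 * INR N + 1) * (PI / 2)) with (PI/2 + INR N * PI) by field.
  rewrite cos_plus, cos_PI2, sin_PI2, sin_kPI. unfold Rdiv; ring.
Qed.

Lemma Tn_PI2 N : Tn N (PI/2) = fsum (fun k => (-1)^k / (2 * INR k + 1)) N.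
Proof.
  unfold Tn. apply fsum_ext; intros k _.
  replace ((2 * INR k + 1) * (PI / 2)) with (PI/2 + INR k * PI) by field.
  rewrite sin_plus, cos_PI2, sin_PI2, cos_kPI. f_equal; ring.
Qed.

Lemma Sn_close x N : 0 < x < PI -> (0 < N)%nat ->
  Rabs (Sn N x + (x - PI/2) * Tn N (PI/2)) <= 2 / (INR N * (sin x)^2).
Proof.
  intros Hx HN.
  assert (HNr : 0 < INR N) by (apply lt_0_INR; lia).
  assert (Hm : 0 < sin x) by (apply sin_gt_0; lra).
  assert (HM := mvt_bound (fun t => Sn N t + (t - PI/2) * Tn N (PI/2))
                  (fun t => - Tn N t + Tn N (PI/2)) (PI/2) x (1 / (INR N * (sin x)^2))).
  assert (HB : Rabs ((Sn N x + (x - PI/2) * Tn N (PI/2)) - (Sn N (PI/2) + (PI/2 - PI/2) * Tn N (PI/2)))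
               <= 1 / (INR N * (sin x)^2) * Rabs (x - PI/2)).
  { apply HM. intros d Hd.
    assert (HdI : inI x d).
    { unfold inI. rewrite Rmin_comm, Rmax_comm. exact Hd. }
    split.
    - apply (is_derive_plus (fun t => Sn N t) (fun t => (t - PI/2) * Tn N (PI/2))).
      + apply Sn_deriv.
      + auto_derive; auto. ring.
    - replace (- Tn N d + Tn N (PI/2)) with (- (Tn N d - Tn N (PI/2))) by ring.
      rewrite Rabs_Ropp. apply Tn_close; auto. }
  rewrite Sn_PI2 in HB.
  replace (Sn N x + (x - PI / 2) * Tn N (PI / 2) - (0 + (PI / 2 - PI / 2) * Tn N (PI / 2)))
    with (Sn N x + (x - PI / 2) * Tn N (PI / 2)) in HB by ring.
  eapply Rle_trans; [exact HB|].
  assert (Hd : Rabs (x - PI/2) <= 2).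
  { apply Rabs_le. pose proof PI_4. lra. }
  replace (2 / (INR N * sin x ^ 2)) with (1 / (INR N * sin x ^ 2) * 2) by (unfold Rdiv; ring).
  apply Rmult_le_compat_l; auto.
  apply Rlt_le, Rdiv_lt_0_compat; [lra|]. apply Rmult_lt_0_compat; auto. apply pow_lt; auto.
Qed.

Lemma leibniz : is_lim_seq (fun N => fsum (fun k => (-1)^k / (2 * INR k + 1)) N) (PI/4).
Proof.
  apply is_lim_seq_incr_1.
  apply is_lim_seq_ext with (sum_f_R0 (tg_alt PI_tg)).
  { intro n. rewrite fsum_f_R0. apply sum_eq. intros i _. unfold tg_alt, PI_tg.
    rewrite plus_INR, mult_INR. simpl INR. unfold Rdiv; f_equal; f_equal; ring. }
  apply is_lim_seq_Reals. rewrite <- Alt_PI_eq. unfold Alt_PI.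
  destruct exist_PI as [a Ha]. replace (4 * a / 4) with a by field. exact Ha.
Qed.

Lemma lim_inv_S c : is_lim_seq (fun n => c / INR (S n)) 0.
Proof.
  assert (H : is_lim_seq (fun n => INR (S n)) p_infty).
  { apply (is_lim_seq_incr_1 INR). apply is_lim_seq_INR. }
  apply is_lim_seq_inv in H; [|discriminate].
  apply (is_lim_seq_scal_l _ c) in H. simpl in H. rewrite Rmult_0_r in H.
  exact H.
Qed.

Definition Fterm x k := cos ((2 * INR k + 1) * x) / (2 * INR k + 1)^2.

Lemma Fval x : 0 < x < PI -> is_series (Fterm x) (PI * (PI - 2 * x) / 8).
Proof.
  intros Hx. apply is_series_fsum.
  assert (Hm : 0 < sin x) by (apply sin_gt_0; lra).
  set (e := fun N => Sn N x + (x - PI/2) * Tn N (PI/2)).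
  assert (He : is_lim_seq e 0).
  { apply is_lim_seq_incr_1.
    apply is_lim_seq_le_le with (fun n => - ((2 / sin x ^ 2) / INR (S n))) (fun n => (2 / sin x ^ 2) / INR (S n)).
    - intro n. assert (Hn := Sn_close x (S n) Hx ltac:(lia)). apply Rabs_le_between in Hn.
      unfold e. replace ((2 / sin x ^ 2) / INR (S n)) with (2 / (INR (S n) * sin x ^ 2)); [lra|].
      assert (INR (S n) <> 0) by (apply not_0_INR; lia). field. split; lra.
    - replace 0 with (- 0) by ring. apply (is_lim_seq_opp _ (Finite 0)).
      replace (Rbar_opp (Finite 0)) with (Finite 0) by (simpl; f_equal; ring).
      apply lim_inv_S.
    - apply lim_inv_S. }
  apply is_lim_seq_ext with (fun N => e N + (- (x - PI/2)) * Tn N (PI/2)).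
  { intro n. unfold e. unfold Sn, Fterm. ring. }
  replace (PI * (PI - 2 * x) / 8) with (0 + (- (x - PI/2)) * (PI/4)) by field.
  apply is_lim_seq_plus'; auto.
  apply (is_lim_seq_scal_l _ (- (x - PI/2)) (PI/4)).
  apply is_lim_seq_ext with (fun N => fsum (fun k => (-1)^k / (2 * INR k + 1)) N).
  { intro n; rewrite Tn_PI2; reflexivity. }
  apply leibniz.
Qed.

Definition aterm k := 1 / (2 * INR k + 1)^2.

Lemma fsum_plus g h N : fsum (fun k => g k + h k) N = fsum g N + fsum h N.
Proof. induction N as [|N IH]; cbn [fsum]; [ring|]. rewrite IH; ring. Qed.

Lemma ex_series_aterm : ex_series aterm.
Proof.
  apply (ex_series_le aterm (fun k => 2 * (1 / (INR k + 1) - 1 / (INR k + 2)))).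
  - intro n. change (norm (aterm n)) with (Rabs (aterm n)). unfold aterm.
    pose proof (pos_INR n).
    rewrite Rabs_pos_eq by (apply Rlt_le, Rdiv_lt_0_compat; [lra|]; apply pow_lt; lra).
    replace (2 * (1 / (INR n + 1) - 1 / (INR n + 2))) with (2 / ((INR n + 1) * (INR n + 2))) by (field; lra).
    replace (1 / (2 * INR n + 1)^2) with (2 / (2 * (2 * INR n + 1)^2)) by (field; lra).
    unfold Rdiv. apply Rmult_le_compat_l; [lra|]. apply Rinv_le_contravar.
    + apply Rmult_lt_0_compat; lra.
    + nra.
  - exists 2. apply is_series_fsum.
    apply is_lim_seq_ext with (fun N => 2 - 2 / INR (S N)).
    + intro N. induction N as [|N IH]; cbn [fsum].
      * simpl. field.
      * rewrite <- IH. rewrite !S_INR. pose proof (pos_INR N). field. lra.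
    + assert (H := is_lim_seq_minus' _ _ 2 0 (is_lim_seq_const 2) (lim_inv_S 2)).
      rewrite Rminus_0_r in H. exact H.
Qed.

Lemma cos_3 : cos (2 * PI / 3) = - (1/2).
Proof.
  replace (2 * PI / 3) with (PI - PI/3) by field.
  rewrite Rtrigo_facts.cos_pi_minus, cos_PI3. ring.
Qed.

Lemma cos_4 : cos (4 * PI / 3) = - (1/2).
Proof.
  replace (4 * PI / 3) with (PI/3 + PI) by field.
  rewrite neg_cos, cos_PI3. ring.
Qed.

Lemma aval : is_series aterm (PI^2 / 8).
Proof.
  destruct ex_series_aterm as [A HA].
  assert (HB : is_series (Fterm (2 * PI / 3)) (PI * (PI - 2 * (2 * PI / 3)) / 8)).
  { apply Fval. pose proof PI_RGT_0. lra. }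
  set (B := PI * (PI - 2 * (2 * PI / 3)) / 8) in HB.
  set (c := fun k => aterm k + 2 * Fterm (2 * PI / 3) k).
  assert (Hc : is_lim_seq (fun N => fsum c N) (A + 2 * B)).
  { apply is_series_fsum in HA. apply is_series_fsum in HB.
    apply is_lim_seq_ext with (fun N => fsum aterm N + 2 * fsum (Fterm (2 * PI / 3)) N).
    { intro N. unfold c. rewrite fsum_plus, fsum_scal. reflexivity. }
    apply is_lim_seq_plus'; auto. apply (is_lim_seq_scal_l _ 2 B). auto. }
  assert (H3 : forall N, fsum c (3 * N) = fsum aterm N / 3).
  { intro N. induction N as [|N IH]; [simpl; field|].
    replace (3 * S N)%nat with (S (S (S (3 * N)))) by lia. cbn [fsum].
    rewrite IH. unfold c, aterm, Fterm.
    assert (E0 : INR (3 * N) = 3 * INR N) by (rewrite mult_INR; simpl; ring).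
    rewrite !S_INR, E0. pose proof (pos_INR N).
    replace ((2 * (3 * INR N) + 1) * (2 * PI / 3)) with (2 * PI / 3 + 2 * INR (2 * N) * PI)
      by (rewrite mult_INR; simpl; field).
    replace ((2 * (3 * INR N + 1) + 1) * (2 * PI / 3)) with (0 + 2 * INR (2 * N + 1) * PI)
      by (rewrite plus_INR, mult_INR; simpl; field).
    replace ((2 * (3 * INR N + 1 + 1) + 1) * (2 * PI / 3)) with (4 * PI / 3 + 2 * INR (2 * N + 1) * PI)
      by (rewrite plus_INR, mult_INR; simpl; field).
    rewrite !cos_period, cos_3, cos_4, cos_0. field. lra. }
  assert (H1 : is_lim_seq (fun N => fsum aterm N / 3) (A + 2 * B)).
  { apply is_lim_seq_ext with (fun N => fsum c (3 * N)); [intro; apply H3|].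
    apply (is_lim_seq_subseq (fun N => fsum c N) _ (fun N => 3 * N)%nat); auto.
    apply eventually_subseq. intro; lia. }
  assert (H2 : is_lim_seq (fun N => fsum aterm N / 3) (A / 3)).
  { apply is_series_fsum in HA.
    apply is_lim_seq_ext with (fun N => / 3 * fsum aterm N); [intro; unfold Rdiv; ring|].
    replace (A / 3) with (/ 3 * A) by (unfold Rdiv; ring).
    apply (is_lim_seq_scal_l _ (/3) A). auto. }
  assert (E : Finite (A + 2 * B) = Finite (A / 3)).
  { rewrite <- (is_lim_seq_unique _ _ H1), <- (is_lim_seq_unique _ _ H2). reflexivity. }
  injection E; intro E'.
  replace (PI^2/8) with A; auto. unfold B in E'. nra.
Qed.

Lemma is_series_plus' a b la lb : is_series a la -> is_series b lb ->
  is_series (fun n => a n + b n) (la + lb).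
Proof.
  rewrite !is_series_fsum; intros Ha Hb.
  apply is_lim_seq_ext with (fun N => fsum a N + fsum b N).
  { intro; rewrite fsum_plus; reflexivity. }
  apply is_lim_seq_plus'; auto.
Qed.

Lemma is_series_scal' c a la : is_series a la -> is_series (fun n => c * a n) (c * la).
Proof.
  rewrite !is_series_fsum; intros Ha.
  apply is_lim_seq_ext with (fun N => c * fsum a N).
  { intro; rewrite fsum_scal; reflexivity. }
  apply (is_lim_seq_scal_l _ c la); auto.
Qed.

Lemma is_series_zero : is_series (fun _ => 0) 0.
Proof.
  apply is_series_fsum. apply is_lim_seq_ext with (fun _ => 0).
  - intro N; induction N; cbn [fsum]; [reflexivity|]. rewrite <- IHN; ring.
  - apply is_lim_seq_const.
Qed.

Lemma is_series_fsum_fin (g : nat -> nat -> R) (l : nat -> R) M :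
  (forall i, (i < M)%nat -> is_series (g i) (l i)) ->
  is_series (fun k => fsum (fun i => g i k) M) (fsum l M).
Proof.
  induction M as [|M IH]; intros H; cbn [fsum].
  - apply is_series_zero.
  - apply is_series_plus'; [apply IH; intros; apply H; lia|apply H; lia].
Qed.

Lemma cos_odd_PI k : cos ((2 * INR k + 1) * PI) = -1.
Proof.
  replace ((2 * INR k + 1) * PI) with (PI + 2 * INR k * PI) by ring.
  rewrite cos_period; apply cos_PI.
Qed.

Lemma Vsum Q M : Q <> 0 ->
  fsum (fun i => 4 / PI^2 * (-1)^i * (PI * (PI - 2 * ((2 * INR i + 1) * PI / Q)) / 8)) M
  = (1 - (-1)^M) / 4 + (-1)^M * INR M / Q.
Proof.
  intros HQ. pose proof PI_RGT_0.
  induction M as [|M IH]; cbn [fsum].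
  - simpl. field; lra.
  - rewrite IH, S_INR. simpl pow. field. split; lra.
Qed.

Lemma sec_even p k : (0 < p)%nat ->
  sec ((2 * INR k + 1) * PI * (1 / INR (4 * p))) =
  fsum (fun i => (-1)^i * cos ((2 * INR i + 1) * ((2 * INR k + 1) * PI * (1 / INR (4 * p))))) (2 * p).
Proof.
  intros Hp. set (th := (2 * INR k + 1) * PI * (1 / INR (4 * p))).
  assert (Hq : 0 < INR p) by (apply lt_0_INR; lia).
  assert (H := telesc th (2 * p)). rewrite pow_1_even in H.
  replace (2 * INR (2 * p) * th) with ((2 * INR k + 1) * PI) in H
    by (unfold th; rewrite !mult_INR; simpl; field; lra).
  rewrite cos_odd_PI in H.
  unfold sec. assert (Hc : cos th <> 0) by (intro E; rewrite E in H; lra).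
  apply (Rmult_eq_reg_l (cos th)); auto. rewrite Rinv_r by auto. lra.
Qed.

Lemma sec_odd P k :
  sec ((2 * INR k + 1) * PI * (1 / INR (2 * P + 1))) =
  2 * fsum (fun i => (-1)^i * cos ((2 * INR i + 1) * ((2 * INR k + 1) * PI * (1 / INR (2 * P + 1))))) P
  - (-1)^P.
Proof.
  set (th := (2 * INR k + 1) * PI * (1 / INR (2 * P + 1))).
  assert (Hq : 0 < INR (2 * P + 1)) by (apply lt_0_INR; lia).
  assert (Eq : INR (2 * P + 1) = 2 * INR P + 1) by (rewrite plus_INR, mult_INR; simpl; ring).
  assert (H := telesc th P).
  assert (H1 : cos ((2 * INR P + 1) * th) = -1).
  { replace ((2 * INR P + 1) * th) with ((2 * INR k + 1) * PI)
      by (unfold th; rewrite Eq in *; field; lra). apply cos_odd_PI. }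
  assert (H2 := cos_prod2 ((2 * INR P + 1) * th) th).
  replace ((2 * INR P + 1) * th - th) with (2 * INR P * th) in H2 by ring.
  assert (H3 : cos ((2 * INR P + 1) * th + th) = cos (2 * INR P * th)).
  { replace ((2 * INR P + 1) * th + th) with (- (2 * INR P * th) + 2 * INR (2 * k + 1) * PI).
    - rewrite cos_period, cos_neg; reflexivity.
    - unfold th. rewrite Eq in *. rewrite plus_INR, mult_INR. simpl. field. lra. }
  rewrite H3, H1 in H2.
  unfold sec. assert (Hc : cos th <> 0).
  { intro E. rewrite E in H2, H. assert (E2 : cos (2 * INR P * th) = 0) by lra. rewrite E2 in H. ring_simplify in H. lra. }
  apply (Rmult_eq_reg_l (cos th)); auto. rewrite Rinv_r by auto.
  assert (cos (2 * INR P * th) = - cos th) by lra.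
  rewrite H0 in H. nra.
Qed.

Lemma x_in i n : (2 * i + 1 < n)%nat -> 0 < (2 * INR i + 1) * PI / INR n < PI.
Proof.
  intros H. apply lt_INR in H. rewrite plus_INR, mult_INR in H. simpl in H.
  pose proof PI_RGT_0. pose proof (pos_INR i).
  assert (Hn : 0 < INR n) by lra.
  set (t := (2 * INR i + 1) * PI / INR n).
  assert (Ht : t * INR n = (2 * INR i + 1) * PI) by (unfold t; field; lra).
  split; nra.
Qed.

Lemma even_series p : (0 < p)%nat -> is_series (f_term (1 / INR (4 * p))) (1 / 2).
Proof.
  intros Hp. set (Q := INR (4 * p)).
  assert (HQ : 0 < Q) by (apply lt_0_INR; lia).
  pose proof PI_RGT_0.
  apply is_series_ext with
    (fun k => fsum (fun i => 4 / PI^2 * (-1)^i * Fterm ((2 * INR i + 1) * PI / Q) k) (2 * p)).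
  { intro k. unfold f_term. unfold Q. rewrite sec_even by auto.
    pose proof (odd_pos k). assert (HQ' : INR (4 * p) <> 0) by (apply not_0_INR; lia).
    replace (4 / PI ^ 2 * (fsum (fun i => (-1) ^ i * cos ((2 * INR i + 1) * ((2 * INR k + 1) * PI * (1 / INR (4 * p))))) (2 * p) / (2 * INR k + 1) ^ 2))
      with ((4 / PI ^ 2 / (2 * INR k + 1) ^ 2) * fsum (fun i => (-1) ^ i * cos ((2 * INR i + 1) * ((2 * INR k + 1) * PI * (1 / INR (4 * p))))) (2 * p))
      by (field; repeat split; try lra; auto).
    rewrite fsum_scal. apply fsum_ext. intros i _. unfold Fterm.
    replace ((2 * INR k + 1) * ((2 * INR i + 1) * PI / INR (4 * p)))
      with ((2 * INR i + 1) * ((2 * INR k + 1) * PI * (1 / INR (4 * p)))) by (field; repeat split; try lra; auto).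
    field. repeat split; try lra; auto. }
  replace (1 / 2) with (fsum (fun i => 4 / PI^2 * (-1)^i * (PI * (PI - 2 * ((2 * INR i + 1) * PI / Q)) / 8)) (2 * p)).
  - apply is_series_fsum_fin. intros i Hi. apply is_series_scal'. apply Fval.
    apply x_in. lia.
  - rewrite Vsum by lra. rewrite pow_1_even. unfold Q. rewrite !mult_INR. simpl. field.
    assert (0 < INR p) by (apply lt_0_INR; lia). lra.
Qed.

Lemma odd_series P : is_series (f_term (1 / INR (2 * P + 1))) (1 / 2 - (-1)^P / INR (2 * P + 1)).
Proof.
  set (Q := INR (2 * P + 1)).
  assert (HQ : 0 < Q) by (apply lt_0_INR; lia).
  pose proof PI_RGT_0.
  apply is_series_ext with
    (fun k => 2 * fsum (fun i => 4 / PI^2 * (-1)^i * Fterm ((2 * INR i + 1) * PI / Q) k) P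
              + (- (-1)^P * 4 / PI^2) * aterm k).
  { intro k. unfold f_term. unfold Q. rewrite sec_odd.
    pose proof (odd_pos k). assert (HQ' : INR (2 * P + 1) <> 0) by (apply not_0_INR; lia).
    replace (4 / PI ^ 2 * ((2 * fsum (fun i => (-1) ^ i * cos ((2 * INR i + 1) * ((2 * INR k + 1) * PI * (1 / INR (2 * P + 1))))) P - (-1)^P) / (2 * INR k + 1) ^ 2))
      with (2 * ((4 / PI ^ 2 / (2 * INR k + 1) ^ 2) * fsum (fun i => (-1) ^ i * cos ((2 * INR i + 1) * ((2 * INR k + 1) * PI * (1 / INR (2 * P + 1))))) P) + (- (-1)^P * 4 / PI^2) * aterm k)
      by (unfold aterm; field; repeat split; try lra; auto).
    rewrite (fsum_scal (4 / PI ^ 2 / (2 * INR k + 1) ^ 2)). f_equal. f_equal. apply fsum_ext. intros i _. unfold Fterm.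
    replace ((2 * INR k + 1) * ((2 * INR i + 1) * PI / INR (2 * P + 1)))
      with ((2 * INR i + 1) * ((2 * INR k + 1) * PI * (1 / INR (2 * P + 1)))) by (field; repeat split; try lra; auto).
    field. repeat split; try lra; auto. }
  replace (1 / 2 - (-1)^P / Q) with
    (2 * fsum (fun i => 4 / PI^2 * (-1)^i * (PI * (PI - 2 * ((2 * INR i + 1) * PI / Q)) / 8)) P
     + (- (-1)^P * 4 / PI^2) * (PI^2 / 8)).
  - apply is_series_plus'.
    + apply is_series_scal'. apply is_series_fsum_fin. intros i Hi. apply is_series_scal'. apply Fval.
      apply x_in. lia.
    + apply is_series_scal'. apply aval.
  - rewrite Vsum by lra. unfold Q. rewrite plus_INR, mult_INR. simpl. field.
    pose proof (pos_INR P). split; lra.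
Qed.

Theorem theorem3p1 (q : nat) (hq : (0 < q)%nat) :
  ((q mod 4 = 0)%nat -> is_series (f_term (1 / INR q)) (1 / 2)) /\
  ((q mod 4 = 1)%nat -> is_series (f_term (1 / INR q)) (1 / 2 - 1 / INR q)) /\
  ((q mod 4 = 2)%nat ->
     forall N : nat, exists k : nat, (N <= k)%nat /\
       cos ((2 * INR k + 1) * PI * (1 / INR q)) = 0) /\
  ((q mod 4 = 3)%nat -> is_series (f_term (1 / INR q)) (1 / 2 + 1 / INR q)).
Proof.
  assert (Hd := Nat.div_mod_eq q 4). set (p := (q / 4)%nat) in Hd.
  split; [|split; [|split]]; intros Hr; rewrite Hr in Hd.
  - replace q with (4 * p)%nat by lia. apply even_series. lia.
  - replace q with (2 * (2 * p) + 1)%nat by lia.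
    replace (1 / INR (2 * (2 * p) + 1)) with ((-1)^(2 * p) / INR (2 * (2 * p) + 1))
      at 2 by (rewrite pow_1_even; reflexivity).
    apply odd_series.
  - intros N. exists ((2 * p + 1) * N + p)%nat. split; [lia|].
    replace q with (2 * (2 * p + 1))%nat by lia.
    replace ((2 * INR ((2 * p + 1) * N + p) + 1) * PI * (1 / INR (2 * (2 * p + 1))))
      with (PI / 2 + INR N * PI).
    + rewrite cos_plus, cos_PI2, sin_PI2, sin_kPI. ring.
    + repeat rewrite ?plus_INR, ?mult_INR.
      replace (INR 2) with 2 by (simpl; ring). replace (INR 1) with 1 by reflexivity.
      pose proof (pos_INR p). field. lra.
  - replace q with (2 * (2 * p + 1) + 1)%nat by lia.
    replace (1 / 2 + 1 / INR (2 * (2 * p + 1) + 1)) with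
      (1 / 2 - (-1)^(2 * p + 1) / INR (2 * (2 * p + 1) + 1)).
    + apply odd_series.
    + rewrite pow_add, pow_1_even. simpl. field.
      apply not_0_INR. lia.
Qed.
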